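(* Let $T=(t_{kl})$ be an $\mathbb{N}$-tableau of shape $\lambda$ and let $\widehat{T}$ be its image under the toggle map defined in the context. Then for every border box $(a,b)$ of $\lambda$, \[\mathrm{diag}_{\widehat{T}}(a,b)=\mathrm{rect}_T(a,b).\]
   Context: Partitions are drawn in English notation with matrix coordinates: the box in row $i$ and column $j$ is $(i,j)$, and $(1,1)$ is the upper-left box. An $\mathbb{N}$-tableau of shape $\lambda$ is an assignment of a nonnegative integer to each box of $\lambda$. A border box of $\lambda$ is a box $(i,j)$ such that $(i+1,j+1)$ is not a box; a corner box is a box $(i,j)$ such that neither $(i+1,j)$ nor $(i,j+1)$ is a box. For an $\mathbb{N}$-tableau $B=(b_{kl})$ and a box $(i,j)$, the diagonal sum is $\mathrm{diag}_B(i,j)=\sum_{k=0}^{\min(i,j)-1}b_{i-k,j-k}$ and the rectangle sum is $\mathrm{rect}_B(i,j)=\sum_{k=1}^{i}\sum_{l=1}^{j}b_{kl}$ (boxes outside the shape contributing $0$). The toggle map $T\mapsto\widehat{T}$ is defined recursively: $\widehat{\emptyset}=\emptyset$; if $T'$ is obtained from $T$ by adding a corner box $(i,j)$ (of $\mathrm{sh}(T')$) with entry $x$, then $\widehat{T'}$ is obtained from $\widehat{T}$ as follows. For $k\ge1$ let $\beta_k,\gamma_k,\alpha_k$ be the entries of $\widehat{T}$ at $(i-k,j-k)$, $(i-k+1,j-k)$, $(i-k,j-k+1)$ respectively (taken to be $0$ if the box is not in $\mathrm{sh}(T)$). Then $\widehat{T'}$ agrees with $\widehat{T}$ except that for $1\le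 k<\min(i,j)$ the entry at $(i-k,j-k)$ becomes $\max(\alpha_{k+1},\gamma_{k+1})+\min(\alpha_k,\gamma_k)-\beta_k$, and the entry at $(i,j)$ is $\max(\alpha_1,\gamma_1)+x$. This is independent of the order in which boxes are added. *)

(* Defs.v *)
From mathcomp Require Import all_boot all_order all_algebra.
Set Implicit Arguments. Unset Strict Implicit. Unset Printing Implicit Defensive.
Import Order.TTheory GRing.Theory Num.Theory.

Definition is_partition (lam : seq nat) : bool :=
  sorted geq lam && all (fun r => 0 < r) lam.

(* Box (i,j), 1-indexed matrix coordinates, lies in the shape lam. *)
Definition in_shape (lam : seq nat) (i j : nat) : bool :=
  (0 < i) && (0 < j) && (j <= nth 0 lam i.-1).

Definition border_box (lam : seq nat) (i j : nat) : bool :=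
  in_shape lam i j && ~~ in_shape lam i.+1 j.+1.

(* An N-tableau of shape lam is a function nat -> nat -> nat; only its values
   on the boxes of lam are relevant (values elsewhere are ignored). *)
Definition ntableau := nat -> nat -> nat.

(* The boxes of lam, row by row, left to right. Adding them in this order,
   each newly added box is a corner box of the current shape. *)
Definition boxes (lam : seq nat) : seq (nat * nat) :=
  flatten [seq [seq (i.+1, j.+1) | j <- iota 0 (nth 0 lam i)] | i <- iota 0 (size lam)].

Local Open Scope ring_scope.

(* Hat-tableaux are int-valued functions (0 outside the current shape). *)
Definition toggle_step (F : nat -> nat -> int) (i j x : nat) : nat -> nat -> int :=
  fun p q =>
    if (p == i) && (q == j) then Num.max (F i.-1 j) (F i j.-1) + x%:Z
    else if [&& (p < i)%N, (i - p == j - q)%N & (i - p < minn i j)%N] then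
      let k := (i - p)%N in
      let alpha m := F (i - m)%N (j - m + 1)%N in
      let gamma m := F (i - m + 1)%N (j - m)%N in
      let beta m := F (i - m)%N (j - m)%N in
      Num.max (alpha k.+1) (gamma k.+1) + Num.min (alpha k) (gamma k) - beta k
    else F p q.

Definition toggle (lam : seq nat) (T : ntableau) : nat -> nat -> int :=
  foldl (fun F b => toggle_step F b.1 b.2 (T b.1 b.2)) (fun _ _ => 0) (boxes lam).

Definition diag_sum (B : nat -> nat -> int) (i j : nat) : int :=
  \sum_(0 <= k < minn i j) B (i - k)%N (j - k)%N.

Definition rect_sum (lam : seq nat) (T : ntableau) (i j : nat) : nat :=
  (\sum_(1 <= k < i.+1) \sum_(1 <= l < j.+1) (if in_shape lam k l then T k l else 0))%N.

(* Main.v *)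
Require Import Defs.
From mathcomp Require Import all_boot all_order all_algebra.
Local Open Scope ring_scope.
From mathcomp Require Import zify.
Import Order.TTheory GRing.Theory Num.Theory.
Set Implicit Arguments. Unset Strict Implicit.

Definition rowS (S : nat -> nat -> bool) (T : ntableau) (k j : nat) : nat :=
  (\sum_(1 <= l < j.+1) (if S k l then T k l else 0))%N.

Definition rectS (S : nat -> nat -> bool) (T : ntableau) (i j : nat) : nat :=
  (\sum_(1 <= k < i.+1) rowS S T k j)%N.

Record Inv (S : nat -> nat -> bool) (T : ntableau) (F : nat -> nat -> int) : Prop := {
  inv_pos : forall p q, S p q -> (0 < p)%N /\ (0 < q)%N;
  inv_down : forall p q p' q', S p q -> (0 < p')%N -> (0 < q')%N ->
     (p' <= p)%N -> (q' <= q)%N -> S p' q';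
  inv_out : forall p q, ~~ S p q -> F p q = 0;
  inv_ge0 : forall p q, 0 <= F p q;
  inv_monoU : forall p q, S p q -> F p.-1 q <= F p q;
  inv_monoL : forall p q, S p q -> F p q.-1 <= F p q;
  inv_diag : forall a b, S a b -> ~~ S a.+1 b.+1 -> diag_sum F a b = (rectS S T a b)%:Z
}.

Lemma ts_ij F i j x : toggle_step F i j x i j = Num.max (F i.-1 j) (F i j.-1) + x%:Z.
Proof. by rewrite /toggle_step !eqxx. Qed.

Definition dg (i j p q : nat) : bool :=
  [&& (p < i)%N, (0 < p)%N, (0 < q)%N & (i - p == j - q)%N].

Lemma ts_loc F i j x p q : dg i j p q ->
  toggle_step F i j x p q =
  Num.max (F p.-1 q) (F p q.-1) + Num.min (F p q.+1) (F p.+1 q) - F p q.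
Proof.
move=> /and4P [h1 h2 h3 /eqP h4].
rewrite /toggle_step /=.
have -> : (p == i) = false by apply/eqP; lia.
have -> : [&& (p < i)%N, (i - p)%N == (j - q)%N & (i - p < minn i j)%N] = true.
  by apply/and3P; split; [done| apply/eqP | ]; lia.
rewrite /=.
have -> : (i - (i - p).+1 = p.-1)%N by lia.
have -> : (j - (i - p).+1 + 1 = q)%N by lia.
have -> : (p.-1 + 1 = p)%N by lia.
have -> : (j - (i - p).+1 = q.-1)%N by lia.
have -> : (i - (i - p) = p)%N by lia.
have -> : (j - (i - p) = q)%N by lia.
by rewrite !addn1.
Qed.

Lemma ts_other F i j x p q : ~~ ((p == i) && (q == j)) -> ~~ dg i j p q ->
  toggle_step F i j x p q = F p q.
Proof.
move=> h1 h2; rewrite /toggle_step (negbTE h1).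
case: ifP => // /and3P [a1 /eqP a2 a3].
exfalso; move: h2; rewrite /dg; move/negP; apply.
by apply/and4P; split => //; try lia; apply/eqP.
Qed.

Unset Implicit Arguments.
Set Strict Implicit.

Lemma rowS_rec S T k j : rowS S T k j.+1 = (rowS S T k j + (if S k j.+1 then T k j.+1 else 0))%N.
Proof. by rewrite /rowS big_nat_recr. Qed.

Lemma rect_split S T i j : (0 < i)%N -> (0 < j)%N ->
  (rectS S T i j + rectS S T i.-1 j.-1 =
   rectS S T i.-1 j + rectS S T i j.-1 + (if S i j then T i j else 0))%N.
Proof.
case: i => // i; case: j => // j _ _ /=.
rewrite /rectS (big_nat_recr i.+1) // (big_nat_recr i.+1) //= rowS_rec. lia.
Qed.

Lemma rect_eq S1 S2 T a b :
  (forall k l, (0 < k)%N -> (0 < l)%N -> (k <= a)%N -> (l <= b)%N -> S1 k l = S2 k l) ->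
  rectS S1 T a b = rectS S2 T a b.
Proof.
move=> H; apply: eq_big_nat => k /andP [k1 k2]; apply: eq_big_nat => l /andP [l1 l2].
by rewrite H.
Qed.

Lemma tele (a g b : nat -> int) n :
  Num.max (a 1%N) (g 1%N) + \sum_(1 <= k < n.+1)
     (Num.max (a k.+1) (g k.+1) + Num.min (a k) (g k) - b k)
  = \sum_(1 <= k < n.+1) (a k + g k - b k) + Num.max (a n.+1) (g n.+1).
Proof.
elim: n => [|n IH]; first by rewrite !big_geq // addr0 add0r.
rewrite (big_nat_recr n.+1) //= (big_nat_recr n.+1) //= addrA IH. Show. move: (\sum_(1 <= i < n.+1) (a i + g i - b i)) => s. lia.
Qed.

Lemma diag0 F b : diag_sum F 0 b = 0.
Proof. by rewrite /diag_sum min0n big_geq. Qed.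
Lemma diag0' F b : diag_sum F b 0 = 0.
Proof. by rewrite /diag_sum minn0 big_geq. Qed.

Lemma diag_inv0 S T F a b : Inv S T F ->
  (a = 0%N \/ b = 0%N \/ (S a b /\ ~~ S a.+1 b.+1)) ->
  diag_sum F a b = (rectS S T a b)%:Z.
Proof.
move=> I [->|[->|[h1 h2]]].
- by rewrite diag0 /rectS big_geq.
- rewrite diag0' /rectS big1_seq //= => k _; rewrite /rowS big_geq //.
- exact: inv_diag I _ _ h1 h2.
Qed.

Lemma step_inv S T F i j :
  Inv S T F -> (0 < i)%N -> (0 < j)%N -> ~~ S i j ->
  (i = 1%N \/ S i.-1 j) -> (j = 1%N \/ S i j.-1) ->
  Inv (fun p q => S p q || ((p == i) && (q == j))) T (toggle_step F i j (T i j)).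
Proof.
move=> I Hi Hj Sij HU HL.
have Sdiag : forall p q, (0 < p)%N -> (0 < q)%N -> (p < i)%N -> (q <= j)%N -> S p q.
  move=> p q h1 h2 h3 h4; case: HU => [e|HU]; first lia.
  apply: (inv_down I HU) => //; lia.
have Sleft : forall p q, (0 < p)%N -> (0 < q)%N -> (p <= i)%N -> (q < j)%N -> S p q.
  move=> p q h1 h2 h3 h4; case: HL => [e|HL]; first lia.
  apply: (inv_down I HL) => //; lia.
have notge : forall p q, S p q -> (i <= p)%N -> (j <= q)%N -> False.
  move=> p q Spq h1 h2; move: Sij; rewrite (inv_down I Spq) //.
have F0 : forall p q, (p = 0)%N \/ (q = 0)%N -> F p q = 0.
  move=> p q h; apply: (inv_out I); apply/negP => /(inv_pos I); lia.
have ge0 := inv_ge0 I.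
have dgS : forall p q, dg i j p q -> S p q.
  move=> p q /and4P [h1 h2 h3 /eqP h4]; apply: Sdiag => //; lia.
have dgB : forall p q, dg i j p q ->
   [/\ F p q <= F p q.+1, F p q <= F p.+1 q, F p.-1 q <= F p q & F p q.-1 <= F p q].
  move=> p q d; have Spq := dgS _ _ d; move: d => /and4P [h1 h2 h3 /eqP h4].
  split; [ | | exact: (inv_monoU I) | exact: (inv_monoL I)].
  - have := inv_monoL I (Sdiag p q.+1 h2 _ h1 _) => /=; apply; lia.
  - have := inv_monoU I (Sleft p.+1 q _ h3 _ _) => /=; apply; lia.
set F' := toggle_step F i j (T i j).
have F'ij : F' i j = Num.max (F i.-1 j) (F i j.-1) + (T i j)%:Z by rewrite /F' ts_ij.
have F'dg : forall p q, dg i j p q ->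
   F' p q = Num.max (F p.-1 q) (F p q.-1) + Num.min (F p q.+1) (F p.+1 q) - F p q.
  by move=> p q d; rewrite /F' ts_loc.
have F'o : forall p q, ~~ ((p == i) && (q == j)) -> ~~ dg i j p q -> F' p q = F p q.
  by move=> p q h1 h2; rewrite /F' ts_other.
split.
- move=> p q /orP [/(inv_pos I) //| /andP [/eqP -> /eqP ->]]; lia.
- move=> p q p' q' /orP [Spq|/andP [/eqP e1 /eqP e2]] h1 h2 h3 h4; apply/orP.
    by left; apply: (inv_down I Spq).
  subst p q; case: (eqVneq p' i) => e1; case: (eqVneq q' j) => e2.
  + by right; rewrite ?e1 ?e2 ?eqxx.
  + by left; apply: Sleft => //; lia.
  + by left; apply: Sdiag => //; lia.
  + by left; apply: Sdiag => //; lia.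
- move=> p q; rewrite negb_or => /andP [nS nij].
  case: (boolP (dg i j p q)) => d; first by rewrite (dgS _ _ d) in nS.
  by rewrite F'o // (inv_out I).
- move=> p q; case: (boolP ((p == i) && (q == j))) => [/andP [/eqP -> /eqP ->]|nij].
    rewrite F'ij; move: (ge0 i.-1 j) (ge0 i j.-1) => g1 g2; lia.
  case: (boolP (dg i j p q)) => d; last by rewrite F'o.
  rewrite F'dg //; case: (dgB _ _ d) => b1 b2 b3 b4; move: (ge0 p.-1 q) => g; lia.
- move=> p q /orP [Spq | /andP [/eqP e1 /eqP e2]]; last first.
    subst p q; rewrite F'ij F'o; first lia.
      by apply/negP => /andP [/eqP e1 _]; lia.
    by rewrite /dg; apply/negP => /and4P [? ? ? /eqP ?]; lia.
  have [pp qp] := inv_pos I Spq.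
  have nij : ~~ ((p == i) && (q == j)).
    by apply/negP => /andP [/eqP e1 /eqP e2]; subst; rewrite Spq in Sij.
  case: (boolP (dg i j p q)) => d.
    rewrite [F' p q]F'dg // F'o.
    + by case: (dgB _ _ d) => b1 b2 b3 b4; lia.
    + by apply/negP => /andP [/eqP e1 _]; move: d => /and4P [? ? ? ?]; lia.
    + by rewrite /dg; apply/negP => /and4P [? ? ? /eqP ?]; move: d => /and4P [? ? ? /eqP ?]; lia.
  rewrite [F' p q]F'o //.
  case: (boolP ((p.-1 == i) && (q == j))) => [/andP [/eqP e1 /eqP e2]|nij1].
    by exfalso; apply: (notge p q Spq); lia.
  case: (boolP (dg i j p.-1 q)) => d1; last by rewrite F'o // (inv_monoU I).
  rewrite [F' p.-1 q]F'dg // (prednK pp); case: (dgB _ _ d1) => b1 b2 b3 b4.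
  rewrite (prednK pp) in b2; lia.
- move=> p q /orP [Spq | /andP [/eqP e1 /eqP e2]]; last first.
    subst p q; rewrite F'ij F'o; first lia.
      by apply/negP => /andP [_ /eqP e1]; lia.
    by rewrite /dg; apply/negP => /and4P [? ? ? /eqP ?]; lia.
  have [pp qp] := inv_pos I Spq.
  have nij : ~~ ((p == i) && (q == j)).
    by apply/negP => /andP [/eqP e1 /eqP e2]; subst; rewrite Spq in Sij.
  case: (boolP (dg i j p q)) => d.
    rewrite [F' p q]F'dg // F'o.
    + by case: (dgB _ _ d) => b1 b2 b3 b4; lia.
    + by apply/negP => /andP [_ /eqP e1]; move: d => /and4P [? ? ? ?]; lia.
    + by rewrite /dg; apply/negP => /and4P [? ? ? /eqP ?]; move: d => /and4P [? ? ? /eqP ?]; lia.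
  rewrite [F' p q]F'o //.
  case: (boolP ((p == i) && (q.-1 == j))) => [/andP [/eqP e1 /eqP e2]|nij1].
    by exfalso; apply: (notge p q Spq); lia.
  case: (boolP (dg i j p q.-1)) => d1; last by rewrite F'o // (inv_monoL I).
  rewrite [F' p q.-1]F'dg // (prednK qp); case: (dgB _ _ d1) => b1 b2 b3 b4.
  rewrite (prednK qp) in b1; lia.
- move=> a b /orP [Sab | /andP [/eqP e1 /eqP e2]]; rewrite negb_or => /andP [nS1 nij1].
  + have [ap bp] := inv_pos I Sab.
    rewrite (@rect_eq _ S); last first.
      move=> k l k0 l0 ka lb /=.
      case: (boolP ((k == i) && (l == j))) => [/andP [/eqP ek /eqP el]|]; last by rewrite orbF.
      by exfalso; apply: (notge a b Sab); lia.
    rewrite -(inv_diag I Sab nS1) /diag_sum; apply: eq_big_nat => k /andP [_ hk].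
    rewrite F'o //.
    * by apply/negP => /andP [/eqP e1 /eqP e2]; apply: (notge a b Sab); lia.
    * rewrite /dg; apply/negP => /and4P [h1 h2 h3 /eqP h4].
      case: (ltnP a.+1 i) => c.
        have : S a.+1 b.+1 by apply: Sdiag => //; lia.
        by rewrite (negbTE nS1).
      case: (eqVneq a.+1 i) => e.
        have eb : b.+1 = j by lia.
        by rewrite e eb !eqxx in nij1.
      by apply: (notge a b Sab); lia.
  + subst a b.
    set S' := (fun p q => S p q || ((p == i) && (q == j))).
    have R := @rect_split S' T i j Hi Hj.
    rewrite /S' /= !eqxx orbT in R.
    have E1 : rectS S' T i.-1 j = rectS S T i.-1 j.
      apply: rect_eq => k l k0 l0 ka lb; rewrite /S'.
      have -> : (k == i) = false by apply/eqP; lia.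
      by rewrite /= ?andbF orbF.
    have E2 : rectS S' T i j.-1 = rectS S T i j.-1.
      apply: rect_eq => k l k0 l0 ka lb; rewrite /S'.
      have -> : (l == j) = false by apply/eqP; lia.
      by rewrite /= ?andbF orbF.
    have E3 : rectS S' T i.-1 j.-1 = rectS S T i.-1 j.-1.
      apply: rect_eq => k l k0 l0 ka lb; rewrite /S'.
      have -> : (k == i) = false by apply/eqP; lia.
      by rewrite /= ?andbF orbF.
    rewrite -/S' E1 E2 E3 in R.
    have Ia : diag_sum F i.-1 j = (rectS S T i.-1 j)%:Z.
      apply: (@diag_inv0 S T F _ _ I); case: HU => [e|h]; [left; lia| right; right; split=> //].
      by rewrite (prednK Hi); apply/negP => h2; apply: (notge _ _ h2); lia.
    have Ig : diag_sum F i j.-1 = (rectS S T i j.-1)%:Z.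
      apply: (@diag_inv0 S T F _ _ I); case: HL => [e|h]; [right; left; lia| right; right; split=> //].
      by rewrite (prednK Hj); apply/negP => h2; apply: (notge _ _ h2); lia.
    have Ib : diag_sum F i.-1 j.-1 = (rectS S T i.-1 j.-1)%:Z.
      apply: (@diag_inv0 S T F _ _ I).
      case: (posnP i.-1) => [e|c1]; first by left.
      case: (posnP j.-1) => [e|c2]; first by right; left.
      right; right; split; first by apply: Sdiag => //; lia.
      by rewrite (prednK Hi) (prednK Hj).
    pose a k := F (i - k)%N (j - k).+1.
    pose g k := F (i - k).+1 (j - k)%N.
    pose b k := F (i - k)%N (j - k)%N.
    have Da : diag_sum F i.-1 j = \sum_(1 <= k < (minn i.-1 j).+1) a k.
      rewrite big_add1 /= /diag_sum; apply: eq_big_nat => k /andP [_ hk].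
      by rewrite /a; congr (F _ _); lia.
    have Dg : diag_sum F i j.-1 = \sum_(1 <= k < (minn i j.-1).+1) g k.
      rewrite big_add1 /= /diag_sum; apply: eq_big_nat => k /andP [_ hk].
      by rewrite /g; congr (F _ _); lia.
    have Db : diag_sum F i.-1 j.-1 = \sum_(1 <= k < (minn i.-1 j.-1).+1) b k.
      rewrite big_add1 /= /diag_sum; apply: eq_big_nat => k /andP [_ hk].
      by rewrite /b; congr (F _ _); lia.
    pose n := (minn i j).-1.
    have En : minn i j = n.+1 by rewrite /n prednK //; lia.
    have L : diag_sum F' i j = (T i j)%:Z + (Num.max (a 1%N) (g 1%N) + \sum_(1 <= k < n.+1)
       (Num.max (a k.+1) (g k.+1) + Num.min (a k) (g k) - b k)).
      rewrite /diag_sum En big_ltn // subn0 subn0 F'ij.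
      have -> : F i.-1 j = a 1%N by rewrite /a; congr (F _ _); lia.
      have -> : F i j.-1 = g 1%N by rewrite /g; congr (F _ _); lia.
      rewrite [_ + (T i j)%:Z]addrC -addrA; congr (_ + (_ + _)).
      apply: eq_big_nat => k /andP [k1 k2].
      rewrite F'dg; last by rewrite /dg; apply/and4P; split; try lia; apply/eqP; lia.
      rewrite /a /g /b; congr (Num.max (F _ _) (F _ _) + _ - _); lia.
    rewrite L tele sumrB big_split /=.
    have a0 : 0 <= a n.+1 by apply: ge0.
    have g0 : 0 <= g n.+1 by apply: ge0.
    case: (ltngtP i j) => c.
    * have az : a n.+1 = 0 by rewrite /a; apply: F0; left; lia.
      rewrite (_ : minn i.-1 j = n) in Da; last by lia.
      rewrite (_ : minn i j.-1 = n.+1) in Dg; last by lia.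
      rewrite (_ : minn i.-1 j.-1 = n) in Db; last by lia.
      rewrite (big_nat_recr n.+1) //= in Dg.
      move: Da Dg Db Ia Ig Ib R az a0 g0.
      move: (\sum_(1 <= k < n.+1) a k) (\sum_(1 <= k < n.+1) g k) (\sum_(1 <= k < n.+1) b k).
      move=> A G B; lia.
    * have gz : g n.+1 = 0 by rewrite /g; apply: F0; right; lia.
      rewrite (_ : minn i.-1 j = n.+1) in Da; last by lia.
      rewrite (_ : minn i j.-1 = n) in Dg; last by lia.
      rewrite (_ : minn i.-1 j.-1 = n) in Db; last by lia.
      rewrite (big_nat_recr n.+1) //= in Da.
      move: Da Dg Db Ia Ig Ib R gz a0 g0.
      move: (\sum_(1 <= k < n.+1) a k) (\sum_(1 <= k < n.+1) g k) (\sum_(1 <= k < n.+1) b k).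
      move=> A G B; lia.
    * have az : a n.+1 = 0 by rewrite /a; apply: F0; left; lia.
      have gz : g n.+1 = 0 by rewrite /g; apply: F0; right; lia.
      rewrite (_ : minn i.-1 j = n) in Da; last by lia.
      rewrite (_ : minn i j.-1 = n) in Dg; last by lia.
      rewrite (_ : minn i.-1 j.-1 = n) in Db; last by lia.
      move: Da Dg Db Ia Ig Ib R az gz.
      move: (\sum_(1 <= k < n.+1) a k) (\sum_(1 <= k < n.+1) g k) (\sum_(1 <= k < n.+1) b k).
      move=> A G B; lia.
Qed.

Local Close Scope ring_scope.


Lemma Inv_ext S1 S2 T F : S1 =2 S2 -> Inv S1 T F -> Inv S2 T F.
Proof.
move=> H [h1 h2 h3 h4 h5 h6 h7]; split.
- by move=> p q; rewrite -H; apply: h1.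
- by move=> p q p' q'; rewrite -!H; apply: h2.
- by move=> p q; rewrite -H; apply: h3.
- exact: h4.
- by move=> p q; rewrite -H; apply: h5.
- by move=> p q; rewrite -H; apply: h6.
- move=> a b; rewrite -!H => s1 s2; rewrite h7 //; congr (Posz _); apply: rect_eq.
  by move=> k l *; rewrite H.
Qed.

Definition Srow (lam : seq nat) (r c p q : nat) : bool :=
  ((p <= r)%N && in_shape lam p q) || [&& p == r.+1, (0 < q)%N & (q <= c)%N].

Definition stepf (T : ntableau) := fun (F : nat -> nat -> int) (b : nat * nat) =>
  toggle_step F b.1 b.2 (T b.1 b.2).

Lemma part_nth lam r : is_partition lam -> (r < size lam)%N -> (0 < r)%N ->
  (nth 0 lam r <= nth 0 lam r.-1)%N.
Proof.
move=> /andP [srt _] h1 h2.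
have tr : transitive (T:=nat) geq by move=> x y z /= h3 h4; lia.
have rf : reflexive (T:=nat) geq by move=> x; exact: leqnn.
apply: (@sorted_leq_nth _ geq tr rf 0%N lam srt r.-1 r); rewrite ?inE /=; lia.
Qed.

Lemma row_inv lam T r F c : is_partition lam -> (r < size lam)%N ->
  (c <= nth 0 lam r)%N -> Inv (Srow lam r c) T F ->
  Inv (Srow lam r (nth 0 lam r)) T
    (foldl (stepf T) F [seq (r.+1, j.+1) | j <- iota c (nth 0 lam r - c)]).
Proof.
move=> Hp Hr.
move: {2 3}(nth 0 lam r - c)%N (erefl (nth 0 lam r - c)%N) => d.
elim: d c F => [|d IH] c F Ed Hc I.
  have e : c = nth 0 lam r by lia.
  by rewrite -e /=.
rewrite /= -/(stepf T).
have Hc' : (c.+1 <= nth 0 lam r)%N by lia.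
apply: IH; [lia | exact: Hc' |].
apply: (@Inv_ext (fun p q => Srow lam r c p q || ((p == r.+1) && (q == c.+1)))).
  move=> p q; rewrite /Srow.
  case: (boolP ((p <= r)%N && in_shape lam p q)) => //= _.
  case: (eqVneq p r.+1) => //= _.
  case: (ltngtP q c.+1) => e; rewrite ?andbT ?andbF ?orbF //=; try lia.
rewrite /stepf /=; apply: step_inv => //.
- by rewrite /Srow negb_or; apply/andP; split; apply/negP; rewrite /in_shape; lia.
- case: (posnP r) => [->|rp]; [by left | right].
  rewrite /Srow /in_shape /=; apply/orP; left.
  have := @part_nth lam r Hp Hr rp; lia.
- case: (posnP c) => [->|cp]; [by left | right].
  by rewrite /Srow; apply/orP; right; rewrite eqxx /=; lia.
Qed.

Lemma rows_inv lam T r F : is_partition lam -> (r <= size lam)%N ->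
  Inv (Srow lam r 0) T F ->
  Inv (Srow lam (size lam) 0) T
    (foldl (stepf T) F (flatten [seq [seq (i.+1, j.+1) | j <- iota 0 (nth 0 lam i)]
                                | i <- iota r (size lam - r)])).
Proof.
move=> Hp.
move Ed: (size lam - r)%N => d.
elim: d r F Ed => [|d IH] r F Ed Hr I.
  have e : r = size lam by lia.
  by rewrite -e /=.
rewrite /= foldl_cat.
apply: IH; [lia | lia |].
have Hr' : (r < size lam)%N by lia.
have := @row_inv lam T r F 0 Hp Hr' (leq0n _) I.
rewrite subn0; apply: Inv_ext => p q; rewrite /Srow /in_shape.
case: (eqVneq p r.+1) => [->|ne] /=; rewrite ?ltnSn ?leqnn ?andbT ?andbF ?orbF //=.
  rewrite ltnn /= (_ : (r.+1 == r.+2) = false) ?orbF //; apply/eqP; lia.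
by rewrite (_ : (p <= r.+1) = (p <= r))%N //; lia.
Qed.

Lemma Srow00 lam p q : Srow lam 0 0 p q = false.
Proof.
rewrite /Srow /in_shape; case: p => [|p] /=; first by rewrite ?andbF.
by case: q => [|q] /=; rewrite ?andbF.
Qed.

Lemma inv0 lam T : Inv (Srow lam 0 0) T (fun _ _ => 0%R).
Proof.
split => [p q|p q p' q'|p q|p q|p q|p q|a b]; rewrite ?Srow00 //.
Qed.

Lemma toggle_inv lam T : is_partition lam -> Inv (in_shape lam) T (toggle lam T).
Proof.
move=> Hp; apply: (@Inv_ext (Srow lam (size lam) 0)).
  move=> p q; rewrite /Srow.
  case: (leqP p (size lam)) => h /=.
    by case: (in_shape lam p q) => //=; case: q => [|q] /=; rewrite ?andbF.
  rewrite /in_shape nth_default; last by lia.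
  by case: q => [|q] /=; rewrite ?andbF.
have := @rows_inv lam T 0 (fun _ _ => 0%R) Hp (leq0n _) (inv0 lam T).
by rewrite subn0.
Qed.


Local Open Scope ring_scope.

Theorem proposition2p6 (lam : seq nat) (T : ntableau) (a b : nat) :
  is_partition lam -> border_box lam a b ->
  diag_sum (toggle lam T) a b = (rect_sum lam T a b)%:Z.
Proof.
move=> Hp /andP [h1 h2].
by rewrite (inv_diag (@toggle_inv lam T Hp) h1 h2).
Qed.
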